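(* Let $\Gamma$ be a connected finite simple graph on $N\ge3$ vertices with minimum degree $d=2$ and $\varepsilon=\frac12$. If there exist distinct vertices $u\sim v\sim w$ with $\deg u=\deg v=2$ and $\deg w=3$, then $\Gamma$ is the $3$-book graph (the book graph on $8$ vertices).
   Context: For a finite simple graph $\Gamma=(V,E)$ without isolated vertices, $\deg v$ is the number of neighbours of $v$ and $\mathcal N(v)=\{w\in V: w\sim v\}$. The normalized Laplacian acts on functions $f:V\to\mathbb R$ by $\Delta f(v)=f(v)-\frac{1}{\deg v}\sum_{w\sim v}f(w)$; its eigenvalues are $0=\lambda_1\le\lambda_2\le\dots\le\lambda_N$, and $\varepsilon:=\min_i|1-\lambda_i|$. $d$ denotes the minimum vertex degree. The $m$-book graph ($m\ge1$) has vertex set $\{x,y,v_1,\dots,v_m,w_1,\dots,w_m\}$ and edges $\{x,v_i\},\{y,w_i\},\{v_i,w_i\}$ for $i=1,\dots,m$. *)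

(* Defs.v *)
From mathcomp Require Import all_boot all_order all_algebra.
From mathcomp Require Import reals.
Set Implicit Arguments. Unset Strict Implicit. Unset Printing Implicit Defensive.
Import Order.TTheory GRing.Theory Num.Theory.

Definition simple_graph (n : nat) (adj : rel 'I_n) : Prop :=
  symmetric adj /\ irreflexive adj.

Definition connected_graph (n : nat) (adj : rel 'I_n) : Prop :=
  forall u v : 'I_n, connect adj u v.

Definition deg (n : nat) (adj : rel 'I_n) (v : 'I_n) : nat :=
  #|[pred w | adj v w]|.

Definition min_degree_is (n : nat) (adj : rel 'I_n) (d : nat) : Prop :=
  (forall v, d <= deg adj v)%N /\ exists v, deg adj v = d.

Local Open Scope ring_scope.

Definition nlap (R : realType) (n : nat) (adj : rel 'I_n) (f : 'I_n -> R)
  (v : 'I_n) : R :=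
  f v - ((deg adj v)%:R)^-1 * \sum_(w | adj v w) f w.

Definition nlap_eigenvalue (R : realType) (n : nat) (adj : rel 'I_n) (lam : R)
  : Prop :=
  exists f : 'I_n -> R, (exists v, f v != 0) /\
    forall v, nlap adj f v = lam * f v.

Definition eps_is (R : realType) (n : nat) (adj : rel 'I_n) (e : R) : Prop :=
  (forall lam, nlap_eigenvalue adj lam -> e <= `|1 - lam|) /\
  (exists lam, nlap_eigenvalue adj lam /\ `|1 - lam| = e).

Local Close Scope ring_scope.

(* The m-book graph on vertex set 'I_(2m+2):
   x = 0, y = 1, v_i = 1 + i, w_i = 1 + m + i  (i = 1..m);
   edges {x,v_i}, {y,w_i}, {v_i,w_i}. *)
Definition book_edge (m : nat) (a b : nat) : bool :=
  [|| (a == 0) && (2 <= b <= m.+1),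
      (a == 1) && (m.+2 <= b <= (2 * m).+1)
    | (2 <= a <= m.+1) && (b == a + m)].

Definition book_adj (m : nat) : rel 'I_(2 * m + 2) :=
  fun a b => book_edge m a b || book_edge m b a.

Definition iso_book (n : nat) (adj : rel 'I_n) (m : nat) : Prop :=
  exists f : 'I_n -> 'I_(2 * m + 2),
    bijective f /\ forall a b, adj a b = @book_adj m (f a) (f b).

(* Main.v *)
Require Import Defs.
From mathcomp Require Import all_boot all_order all_algebra.
From mathcomp Require Import reals.
From mathcomp Require Import complex.
From mathcomp Require Import ring lra zify.
Set Implicit Arguments. Unset Strict Implicit. Unset Printing Implicit Defensive.
Import Order.TTheory GRing.Theory Num.Theory Num.Def.
Local Open Scope ring_scope.

Section SA.
Local Open Scope sesquilinear_scope.
Variable R : rcfType.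
Local Notation C := (R[i]).
Local Notation toC := (real_complex R).

Lemma toC_real (x : R) : toC x \is Num.real.
Proof. by rewrite /= complex_real. Qed.

Lemma conj_toC (x : R) : conjC (toC x) = toC x.
Proof. exact: conj_Creal (toC_real x). Qed.

Lemma Re_sum (I : Type) (r : seq I) (F : I -> C) :
  complex.Re (\sum_(i <- r) F i) = \sum_(i <- r) complex.Re (F i).
Proof.
elim: r => [|a r IH]; first by rewrite !big_nil.
by rewrite !big_cons -IH; case: (F a) => ??; case: (\sum_(i <- r) F i).
Qed.

Lemma Im_sum (I : Type) (r : seq I) (F : I -> C) :
  complex.Im (\sum_(i <- r) F i) = \sum_(i <- r) complex.Im (F i).
Proof.
elim: r => [|a r IH]; first by rewrite !big_nil.
by rewrite !big_cons -IH; case: (F a) => ??; case: (\sum_(i <- r) F i).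
Qed.


Lemma toC_mulRe (z : C) (x : R) : complex.Re (z * toC x) = complex.Re z * x.
Proof. by case: z => a b /=; rewrite ?(mulr0, mul0r, addr0, add0r, subr0) ?[_ * x]mulrC. Qed.
Lemma toC_mulIm (z : C) (x : R) : complex.Im (z * toC x) = complex.Im z * x.
Proof. by case: z => a b /=; rewrite ?(mulr0, mul0r, addr0, add0r, subr0) ?[_ * x]mulrC. Qed.
Lemma toC_mulRe' (z : C) (x : R) : complex.Re (toC x * z) = x * complex.Re z.
Proof. by case: z => a b /=; rewrite ?(mulr0, mul0r, addr0, add0r, subr0). Qed.
Lemma toC_mulIm' (z : C) (x : R) : complex.Im (toC x * z) = x * complex.Im z.
Proof. by case: z => a b /=; rewrite ?(mulr0, mul0r, addr0, add0r, subr0). Qed.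

Lemma specA n (S : 'M[R]_n) (c : R) :
  0 <= c -> S^T = S ->
  (forall (mu : R) (r : 'rV[R]_n), r != 0 -> r *m S = mu *: r -> c <= `|mu|) ->
  forall h : 'rV[R]_n, c ^+ 2 * (h *m h^T) 0 0 <= ((h *m S) *m (h *m S)^T) 0 0.
Proof.
move=> c0 Ssym Heig h.
pose S' := S ^ toC.
have Sh : S' \is hermsymmx.
  apply/is_hermitianmxP; rewrite expr0 scale1r; apply/matrixP=> i j.
  rewrite !mxE conj_toC -[in RHS]Ssym mxE //.
pose U := spectralmx S'; pose d := spectral_diag S'.
have Uu : U \is unitarymx := spectral_unitarymx S'.
have Uunit : U \in unitmx := spectral_unit S'.
have SE : S' = invmx U *m diag_mx d *m U.
  exact/orthomx_spectralP/hermitian_normalmx.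
have dreal : d \is a realmx := hermitian_spectral_diag_real Sh.
have invU : invmx U = U^t* := invmx_unitary Uu.
have UUt : U *m U^t* = 1%:M by apply/unitarymxP.
have UtU : U^t* *m U = 1%:M by rewrite -invU mulVmx.
have Ueig : U *m S' = diag_mx d *m U by rewrite SE !mulmxA mulmxV // mul1mx.
have dR : forall i, d 0 i = toC (complex.Re (d 0 i)).
  by move=> i; rewrite RRe_real // (mxOverP dreal).
have cb : forall i, c <= `|complex.Re (d 0 i)|.
  move=> i; pose r := row i U.
  have rS : r *m S' = d 0 i *: r.
    by rewrite -row_mul Ueig; apply/rowP=> j; rewrite mul_diag_mx !mxE.
  have r0 : r != 0.
    apply/negP=> /eqP r0; move/matrixP/(_ i i): UUt.
    have Uij : forall j, U i j = 0.
      by move=> j; move/rowP/(_ j): r0; rewrite !mxE.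
    rewrite mxE big1 => [|j _]; last by rewrite Uij mul0r.
    by rewrite mxE eqxx => /eqP; rewrite eq_sym oner_eq0.
  pose rR := \row_j complex.Re (r 0 j); pose rI := \row_j complex.Im (r 0 j).
  have eR : rR *m S = complex.Re (d 0 i) *: rR.
    apply/rowP=> k; move/rowP/(_ k)/(congr1 (@complex.Re R)): rS.
    rewrite !mxE Re_sum [d 0 i]dR toC_mulRe' => <-.
    by apply: eq_bigr => j _; rewrite !mxE toC_mulRe.
  have eI : rI *m S = complex.Re (d 0 i) *: rI.
    apply/rowP=> k; move/rowP/(_ k)/(congr1 (@complex.Im R)): rS.
    rewrite !mxE Im_sum [d 0 i]dR toC_mulIm' => <-.
    by apply: eq_bigr => j _; rewrite !mxE toC_mulIm.
  case: (eqVneq rR 0) => [rR0|rR0]; last exact: Heig rR0 eR.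
  case: (eqVneq rI 0) => [rI0|rI0]; last exact: Heig rI0 eI.
  exfalso; move/negP: r0; apply; apply/eqP/rowP=> j.
  move/rowP/(_ j): rR0; move/rowP/(_ j): rI0.
  rewrite !mxE; case: (U i j) => a b /= -> ->; by [].
have nU : forall x : 'rV[C]_n, (x *m U) *m (x *m U)^t* = x *m x^t*.
  by move=> x; rewrite trmx_mul map_mxM !mulmxA -[x *m U *m _]mulmxA UUt mulmx1.
have nmap : forall v : 'rV[R]_n, toC ((v *m v^T) 0 0) = ((map_mx toC v) *m (map_mx toC v)^t*) 0 0.
  move=> v; rewrite !mxE rmorph_sum; apply: eq_bigr => j _.
  by rewrite !mxE rmorphM conj_toC.
pose hC := map_mx toC h; pose k := hC *m U^t*.
have hCk : hC = k *m U by rewrite /k -mulmxA UtU mulmx1.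
have hCS : map_mx toC (h *m S) = (k *m diag_mx d) *m U.
  by rewrite map_mxM -/hC -/S' hCk SE !mulmxA mulmxK.
rewrite -lecR.
have -> : toC (c ^+ 2 * (h *m h^T) 0 0) = toC c ^+ 2 * (hC *m hC^t*) 0 0.
  by rewrite -nmap rmorphM rmorphXn.
rewrite nmap hCS nU hCk nU; clearbody k; rewrite mul_mx_diag.
rewrite !mxE mulr_sumr; apply: ler_sum => j _.
rewrite !mxE.
rewrite (_ : k 0 j * d 0 j * conjC (k 0 j * d 0 j) = (k 0 j * conjC (k 0 j)) * (d 0 j * conjC (d 0 j))); last by rewrite rmorphM mulrACA.
rewrite [X in X <= _]mulrC; apply: ler_wpM2l; first exact: mul_conjC_ge0.
rewrite [d 0 j]dR conj_toC -rmorphM -rmorphXn lecR -expr2.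
have := cb j; set x := complex.Re _ => cx.
by rewrite -[X in _ <= X]real_normK ?num_real // lerXn2r ?nnegrE ?normr_ge0.
Qed.
End SA.

Section B.
Variable R : realType.
Variable n : nat.
Variable adj : rel 'I_n.
Hypothesis adjsym : symmetric adj.
Hypothesis deg_pos : forall x, (0 < deg adj x)%N.
Hypothesis Heps : forall lam : R, nlap_eigenvalue adj lam -> 1 / 2 <= `|1 - lam|.

Let dg x : R := (deg adj x)%:R.
Let sq x : R := Num.sqrt (dg x).

Lemma dg_gt0 x : 0 < dg x.
Proof. by rewrite /dg ltr0n deg_pos. Qed.
Lemma sq_gt0 x : 0 < sq x.
Proof. by rewrite /sq sqrtr_gt0 dg_gt0. Qed.
Lemma sqK x : sq x ^+ 2 = dg x.
Proof. by rewrite /sq sqr_sqrtr // ltW // dg_gt0. Qed.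

Definition Smx : 'M[R]_n := \matrix_(i, j) ((adj i j)%:R / (sq i * sq j)).

Lemma Smx_sym : Smx^T = Smx.
Proof. by apply/matrixP => i j; rewrite !mxE adjsym [sq j * _]mulrC. Qed.

Lemma Smx_mul (h : 'rV[R]_n) x :
  (h *m Smx) 0 x = (sq x)^-1 * \sum_(y | adj x y) (h 0 y / sq y).
Proof.
rewrite mxE mulr_sumr [in RHS]big_mkcond /=; apply: eq_bigr => y _.
rewrite mxE adjsym; case: (adj x y); last by rewrite mul0r mulr0.
by rewrite invfM mul1r mulrA mulrC mulrA.
Qed.

Lemma sq_neq0 x : sq x != 0. Proof. exact/lt0r_neq0/sq_gt0. Qed.
Lemma dg_neq0 x : dg x != 0. Proof. exact/lt0r_neq0/dg_gt0. Qed.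

Lemma eig_bound (mu : R) (r : 'rV[R]_n) : r != 0 -> r *m Smx = mu *: r -> 1/2 <= `|mu|.
Proof.
move=> r0 rS.
pose f y := r 0 y / sq y.
have Hf : forall x, nlap adj f x = (1 - mu) * f x.
  move=> x; move/rowP/(_ x): rS; rewrite Smx_mul mxE => E.
  have ES : \sum_(y | adj x y) f y = mu * dg x * f x.
    have -> : \sum_(y | adj x y) f y = sq x * ((sq x)^-1 * \sum_(y | adj x y) f y).
      by field; exact: sq_neq0.
    rewrite /f E -sqK; field; exact: sq_neq0.
  rewrite /nlap ES -/(dg x); field; exact: dg_neq0.
have : nlap_eigenvalue adj (1 - mu).
  exists f; split; last exact Hf.
  have : ~~ [forall y, r 0 y == 0].
    apply: contra r0 => /forallP H; apply/eqP/rowP => y; rewrite mxE; exact/eqP/H.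
  rewrite negb_forall => /existsP[y ry].
  by exists y; rewrite /f mulf_neq0 // invr_neq0 // sq_neq0.
move/Heps; suff -> : 1 - (1 - mu) = mu by [].
by ring.
Qed.

Lemma key (g : 'I_n -> R) :
  1/4 * \sum_x (deg adj x)%:R * g x ^+ 2 <=
  \sum_x ((deg adj x)%:R)^-1 * (\sum_(y | adj x y) g y) ^+ 2.
Proof.
pose h := \row_x (sq x * g x).
have := specA (c := 1/2) _ Smx_sym eig_bound h.
have hy : forall y, h 0 y / sq y = g y.
  by move=> y; rewrite mxE mulrC mulrA mulVf ?sq_neq0 // mul1r.
have -> : (h *m h^T) 0 0 = \sum_x dg x * g x ^+ 2.
  rewrite mxE; apply: eq_bigr => x _; rewrite !mxE -sqK; ring.
have -> : ((h *m Smx) *m (h *m Smx)^T) 0 0 =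
    \sum_x (dg x)^-1 * (\sum_(y | adj x y) g y) ^+ 2.
  rewrite mxE; apply: eq_bigr => x _; rewrite [X in _ * X]mxE Smx_mul (eq_bigr _ (fun y _ => hy y)).
  rewrite -sqK; field; exact: sq_neq0.
have -> : (1 / 2 : R) ^+ 2 = 1 / 4 by field.
apply; lra.
Qed.

End B.

Section G.
Variable R : realType.
Variable n : nat.
Variable adj : rel 'I_n.
Hypothesis adjsym : symmetric adj.
Hypothesis adjirr : irreflexive adj.
Hypothesis Hmin : forall x, (2 <= deg adj x)%N.
Hypothesis Hkey : forall g : 'I_n -> R,
  1/4 * \sum_x (deg adj x)%:R * g x ^+ 2 <=
  \sum_x ((deg adj x)%:R)^-1 * (\sum_(y | adj x y) g y) ^+ 2.

Lemma card_adj_ge (s : 'I_n) (L : seq 'I_n) :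
  uniq L -> all (adj s) L -> (size L <= deg adj s)%N.
Proof.
move=> uL aL; rewrite /deg -(card_uniqP uL); apply: subset_leq_card.
by apply/subsetP => y yL; rewrite inE; apply: (allP aL).
Qed.

Lemma closed_nb (s : 'I_n) (L : seq 'I_n) :
  uniq L -> all (adj s) L -> deg adj s = size L -> forall z, adj z s = (z \in L).
Proof.
move=> uL aL dL z; rewrite adjsym.
have sub : [pred y in L] \subset [pred y | adj s y].
  by apply/subsetP => y yL; rewrite inE; apply: (allP aL).
have E : [pred y in L] =i [pred y | adj s y].
  apply/(subset_cardP _ sub); rewrite -/(deg adj s) dL.
  exact/card_uniqP.
by have := E z; rewrite !inE.
Qed.

Lemma extra_nb (s : 'I_n) (L : seq 'I_n) :
  (size L < deg adj s)%N -> exists y, adj s y /\ y \notin L.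
Proof.
move=> lt.
case: (boolP [exists y, adj s y && (y \notin L)]) => [/existsP[y /andP[a b]]|H].
  by exists y.
exfalso.
have sub : [pred y | adj s y] \subset [pred y in L].
  apply/subsetP => y; rewrite inE => ay.
  by move/existsPn: H => /(_ y); rewrite ay /= negbK.
have := subset_leq_card sub; rewrite -/(deg adj s) => H1.
have := card_size L; move: lt H1; rewrite -!/(deg adj s).
have e : #|[pred y in L]| = #|L| by apply: eq_card.
move=> a b c; have := leq_trans a (leq_trans b (leq_trans (eq_leq e) c)); by rewrite ltnn.
Qed.

Lemma test (L : seq 'I_n) (g : 'I_n -> R) :
  uniq L -> (forall y, g y != 0 -> y \in L) ->
  (forall y z, g y != 0 -> adj y z -> z \in L) ->
  1/4 * \sum_(x <- L) (deg adj x)%:R * g x ^+ 2 <=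
  \sum_(x <- L) ((deg adj x)%:R)^-1 * (\sum_(y <- L) (adj x y)%:R * g y) ^+ 2.
Proof.
move=> uL gL nbL; have := Hkey g.
have g0 : forall y, y \notin L -> g y = 0.
  by move=> y yL; apply/eqP; apply: contraNT yL; apply: gL.
have inner : forall x, \sum_(y | adj x y) g y = \sum_(y <- L) (adj x y)%:R * g y.
  move=> x; rewrite (big_uniq _ uL) big_mkcond [X in _ = X]big_mkcond /=.
  apply: eq_bigr => y _; case: (boolP (y \in L)) => yL.
    by case: (adj x y); rewrite ?mul1r ?mul0r.
  by rewrite g0 //; case: (adj x y).
have sumL : forall F : 'I_n -> R, (forall x, x \notin L -> F x = 0) ->
    \sum_x F x = \sum_(x <- L) F x.
  move=> F HF; rewrite (big_uniq _ uL) [X in _ = X]big_mkcond; apply: eq_bigr => x _.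
  by case: ifP => // /negbT; apply: HF.
rewrite (sumL (fun x => _ * g x ^+ 2)); last first.
  by move=> x xL; rewrite g0 // expr0n mulr0.
rewrite (sumL (fun x => _ * (\sum_(y | adj x y) g y) ^+ 2)); last first.
  move=> x xL; rewrite inner big_seq.
  rewrite big1 ?expr0n ?mulr0 //= => y yL.
  case: (eqVneq (g y) 0) => [->|gy]; first by rewrite mulr0.
  case axy: (adj x y); last by rewrite mul0r.
  by move: xL; rewrite (nbL y x gy) // adjsym.
move=> H; apply: (le_trans H); rewrite le_eqVlt; apply/orP; left; apply/eqP.
by apply: eq_bigr => x _; rewrite inner.
Qed.

Lemma inv_deg_le (x : 'I_n) (k : nat) : (k.+1 <= deg adj x)%N ->
  ((deg adj x)%:R)^-1 <= (k.+1)%:R^-1 :> R.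
Proof.
move=> h; rewrite lef_pV2 ?posrE ?ltr0n //; last exact: leq_trans h.
by rewrite ler_nat.
Qed.

Lemma inv_deg2 (x : 'I_n) : ((deg adj x)%:R)^-1 <= 1/2 :> R.
Proof. by rewrite mul1r; apply: inv_deg_le. Qed.

Ltac explode := repeat match goal with
  | H : is_true (_ && _) |- _ => case/andP: H => ? ?
  end.
Ltac simpl_eq := repeat (match goal with
  | H : is_true (?a != ?b) |- context [?a == ?b] => rewrite (negbTE H)
  | H : is_true (?a != ?b) |- context [?b == ?a] => rewrite [b == a]eq_sym (negbTE H)
  end); rewrite ?eqxx /=.

Lemma sub_mem (Ls L : seq 'I_n) : all (mem L) Ls -> forall z, z \in Ls -> z \in L.
Proof. by move=> /allP H z /H. Qed.

Ltac memtac := rewrite /= ?inE ?eqxx /= ?orbT ?andbT //.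

Local Notation full s L := (forall z, adj z s = (z \in L)).

Lemma Ttri1 u v w c :
  uniq [:: u; v; w; c] ->
  full u [:: v; w] ->
  full v [:: u; w] ->
  full w [:: v; u; c] ->
  deg adj u = 2%N ->
  deg adj v = 2%N ->
  deg adj w = 3%N ->
  (3 <= deg adj c)%N -> False.
Proof.
move=> uL Cu Cv Cw du dv dw bc.
pose G y : R := if y == u then (1%:R : R) else if y == v then (1%:R : R) else if y == w then (- 1%:R : R) else 0.
have gL : forall y, G y != 0 -> y \in [:: u; v; w; c].
  move=> y; rewrite /G; repeat case: ifP => [/eqP -> _ | _]; memtac.
have nbL : forall y z, G y != 0 -> adj y z -> z \in [:: u; v; w; c].
  move=> y z; rewrite /G; repeat case: ifP => [/eqP -> _ | _].
  - by rewrite adjsym Cu; apply: sub_mem; memtac.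
  - by rewrite adjsym Cv; apply: sub_mem; memtac.
  - by rewrite adjsym Cw; apply: sub_mem; memtac.
  by move=> /negP H; exfalso; apply: H; apply/eqP.
have := test uL gL nbL.
move: (uL); rewrite /= !inE !negb_or => ?; explode.
have := inv_deg2 u.
have := inv_deg2 v.
have := inv_deg2 w.
have := inv_deg2 c.
have := inv_deg_le (k := 2) bc.
rewrite !big_cons !big_nil /G; simpl_eq.
rewrite ?mulr0 ?addr0 ?mul0r ?add0r.
rewrite ?Cu ?Cv ?Cw; memtac; simpl_eq.
rewrite ?du ?dv ?dw.
move=> *; clear du dv dw bc; lra.
Qed.

Lemma Ttri2 u v w c cp :
  uniq [:: u; v; w; c; cp] ->
  full u [:: v; w] ->
  full v [:: u; w] ->
  full w [:: v; u; c] ->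
  full c [:: w; cp] ->
  deg adj u = 2%N ->
  deg adj v = 2%N ->
  deg adj w = 3%N ->
  deg adj c = 2%N -> False.
Proof.
move=> uL Cu Cv Cw Cc du dv dw dc.
pose G y : R := if y == u then (1%:R : R) else if y == v then (1%:R : R) else if y == w then (- 1%:R : R) else if y == c then (- 1%:R : R) else 0.
have gL : forall y, G y != 0 -> y \in [:: u; v; w; c; cp].
  move=> y; rewrite /G; repeat case: ifP => [/eqP -> _ | _]; memtac.
have nbL : forall y z, G y != 0 -> adj y z -> z \in [:: u; v; w; c; cp].
  move=> y z; rewrite /G; repeat case: ifP => [/eqP -> _ | _].
  - by rewrite adjsym Cu; apply: sub_mem; memtac.
  - by rewrite adjsym Cv; apply: sub_mem; memtac.
  - by rewrite adjsym Cw; apply: sub_mem; memtac.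
  - by rewrite adjsym Cc; apply: sub_mem; memtac.
  by move=> /negP H; exfalso; apply: H; apply/eqP.
have := test uL gL nbL.
move: (uL); rewrite /= !inE !negb_or => ?; explode.
have := inv_deg2 u.
have := inv_deg2 v.
have := inv_deg2 w.
have := inv_deg2 c.
have := inv_deg2 cp.
rewrite !big_cons !big_nil /G; simpl_eq.
rewrite ?mulr0 ?addr0 ?mul0r ?add0r.
rewrite ?Cu ?Cv ?Cw ?Cc; memtac; simpl_eq.
rewrite ?du ?dv ?dw ?dc.
move=> *; clear du dv dw dc; lra.
Qed.

Lemma T2 u v w b c :
  uniq [:: u; v; w; b; c] ->
  full u [:: v; b] ->
  full w [:: v; b; c] ->
  deg adj u = 2%N ->
  deg adj v = 2%N ->
  deg adj w = 3%N -> False.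
Proof.
move=> uL Cu Cw du dv dw.
pose G y : R := if y == u then (1%:R : R) else if y == w then (- 1%:R : R) else 0.
have gL : forall y, G y != 0 -> y \in [:: u; v; w; b; c].
  move=> y; rewrite /G; repeat case: ifP => [/eqP -> _ | _]; memtac.
have nbL : forall y z, G y != 0 -> adj y z -> z \in [:: u; v; w; b; c].
  move=> y z; rewrite /G; repeat case: ifP => [/eqP -> _ | _].
  - by rewrite adjsym Cu; apply: sub_mem; memtac.
  - by rewrite adjsym Cw; apply: sub_mem; memtac.
  by move=> /negP H; exfalso; apply: H; apply/eqP.
have := test uL gL nbL.
move: (uL); rewrite /= !inE !negb_or => ?; explode.
have := inv_deg2 u.
have := inv_deg2 v.
have := inv_deg2 w.
have := inv_deg2 b.
have := inv_deg2 c.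
rewrite !big_cons !big_nil /G; simpl_eq.
rewrite ?mulr0 ?addr0 ?mul0r ?add0r.
rewrite ?Cu ?Cw; memtac; simpl_eq.
rewrite ?du ?dv ?dw.
move=> *; clear du dv dw; lra.
Qed.

Lemma T3 u v w a b c :
  uniq [:: u; v; w; a; b; c] ->
  full u [:: v; a] ->
  full w [:: v; b; c] ->
  deg adj u = 2%N ->
  deg adj v = 2%N ->
  deg adj w = 3%N ->
  (4 <= deg adj a)%N -> False.
Proof.
move=> uL Cu Cw du dv dw ba.
pose G y : R := if y == u then (2%:R : R) else if y == w then (- 1%:R : R) else 0.
have gL : forall y, G y != 0 -> y \in [:: u; v; w; a; b; c].
  move=> y; rewrite /G; repeat case: ifP => [/eqP -> _ | _]; memtac.
have nbL : forall y z, G y != 0 -> adj y z -> z \in [:: u; v; w; a; b; c].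
  move=> y z; rewrite /G; repeat case: ifP => [/eqP -> _ | _].
  - by rewrite adjsym Cu; apply: sub_mem; memtac.
  - by rewrite adjsym Cw; apply: sub_mem; memtac.
  by move=> /negP H; exfalso; apply: H; apply/eqP.
have := test uL gL nbL.
move: (uL); rewrite /= !inE !negb_or => ?; explode.
have := inv_deg2 u.
have := inv_deg2 v.
have := inv_deg2 w.
have := inv_deg2 a.
have := inv_deg2 b.
have := inv_deg2 c.
have := inv_deg_le (k := 3) ba.
rewrite !big_cons !big_nil /G; simpl_eq.
rewrite ?mulr0 ?addr0 ?mul0r ?add0r.
rewrite ?Cu ?Cw; memtac; simpl_eq.
rewrite ?du ?dv ?dw.
move=> *; clear du dv dw ba; lra.
Qed.

Lemma T4 v u w a ap :
  uniq [:: v; u; w; a; ap] ->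
  full v [:: u; w] ->
  full a [:: u; ap] ->
  deg adj v = 2%N ->
  deg adj u = 2%N ->
  deg adj w = 3%N ->
  deg adj a = 2%N -> False.
Proof.
move=> uL Cv Ca dv du dw da.
pose G y : R := if y == v then (1%:R : R) else if y == a then (- 1%:R : R) else 0.
have gL : forall y, G y != 0 -> y \in [:: v; u; w; a; ap].
  move=> y; rewrite /G; repeat case: ifP => [/eqP -> _ | _]; memtac.
have nbL : forall y z, G y != 0 -> adj y z -> z \in [:: v; u; w; a; ap].
  move=> y z; rewrite /G; repeat case: ifP => [/eqP -> _ | _].
  - by rewrite adjsym Cv; apply: sub_mem; memtac.
  - by rewrite adjsym Ca; apply: sub_mem; memtac.
  by move=> /negP H; exfalso; apply: H; apply/eqP.
have := test uL gL nbL.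
move: (uL); rewrite /= !inE !negb_or => ?; explode.
have := inv_deg2 v.
have := inv_deg2 u.
have := inv_deg2 w.
have := inv_deg2 a.
have := inv_deg2 ap.
rewrite !big_cons !big_nil /G; simpl_eq.
rewrite ?mulr0 ?addr0 ?mul0r ?add0r.
rewrite ?Cv ?Ca; memtac; simpl_eq.
rewrite ?dv ?du ?dw ?da.
move=> *; clear dv du dw da; lra.
Qed.

Lemma T5 v u w a b :
  uniq [:: v; u; w; a; b] ->
  full v [:: u; w] ->
  full a [:: u; b] ->
  deg adj v = 2%N ->
  deg adj u = 2%N ->
  deg adj w = 3%N ->
  deg adj a = 2%N -> False.
Proof.
move=> uL Cv Ca dv du dw da.
pose G y : R := if y == v then (1%:R : R) else if y == a then (- 1%:R : R) else 0.
have gL : forall y, G y != 0 -> y \in [:: v; u; w; a; b].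
  move=> y; rewrite /G; repeat case: ifP => [/eqP -> _ | _]; memtac.
have nbL : forall y z, G y != 0 -> adj y z -> z \in [:: v; u; w; a; b].
  move=> y z; rewrite /G; repeat case: ifP => [/eqP -> _ | _].
  - by rewrite adjsym Cv; apply: sub_mem; memtac.
  - by rewrite adjsym Ca; apply: sub_mem; memtac.
  by move=> /negP H; exfalso; apply: H; apply/eqP.
have := test uL gL nbL.
move: (uL); rewrite /= !inE !negb_or => ?; explode.
have := inv_deg2 v.
have := inv_deg2 u.
have := inv_deg2 w.
have := inv_deg2 a.
have := inv_deg2 b.
rewrite !big_cons !big_nil /G; simpl_eq.
rewrite ?mulr0 ?addr0 ?mul0r ?add0r.
rewrite ?Cv ?Ca; memtac; simpl_eq.
rewrite ?dv ?du ?dw ?da.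
move=> *; clear dv du dw da; lra.
Qed.

Lemma T6 u v w a b c n1 :
  uniq [:: u; v; w; a; b; c; n1] ->
  full u [:: v; a] ->
  full v [:: u; w] ->
  full w [:: v; b; c] ->
  full a [:: u; b; n1] ->
  deg adj u = 2%N ->
  deg adj v = 2%N ->
  deg adj w = 3%N ->
  deg adj a = 3%N -> False.
Proof.
move=> uL Cu Cv Cw Ca du dv dw da.
pose G y : R := if y == u then (- 1%:R : R) else if y == v then (1%:R : R) else if y == w then (1%:R : R) else if y == a then (- 1%:R : R) else 0.
have gL : forall y, G y != 0 -> y \in [:: u; v; w; a; b; c; n1].
  move=> y; rewrite /G; repeat case: ifP => [/eqP -> _ | _]; memtac.
have nbL : forall y z, G y != 0 -> adj y z -> z \in [:: u; v; w; a; b; c; n1].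
  move=> y z; rewrite /G; repeat case: ifP => [/eqP -> _ | _].
  - by rewrite adjsym Cu; apply: sub_mem; memtac.
  - by rewrite adjsym Cv; apply: sub_mem; memtac.
  - by rewrite adjsym Cw; apply: sub_mem; memtac.
  - by rewrite adjsym Ca; apply: sub_mem; memtac.
  by move=> /negP H; exfalso; apply: H; apply/eqP.
have := test uL gL nbL.
move: (uL); rewrite /= !inE !negb_or => ?; explode.
have := inv_deg2 u.
have := inv_deg2 v.
have := inv_deg2 w.
have := inv_deg2 a.
have := inv_deg2 b.
have := inv_deg2 c.
have := inv_deg2 n1.
rewrite !big_cons !big_nil /G; simpl_eq.
rewrite ?mulr0 ?addr0 ?mul0r ?add0r.
rewrite ?Cu ?Cv ?Cw ?Ca; memtac; simpl_eq.
rewrite ?du ?dv ?dw ?da.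
move=> *; clear du dv dw da; lra.
Qed.

Lemma T7 w a v b c u :
  uniq [:: w; a; v; b; c; u] ->
  full w [:: v; b; c] ->
  full a [:: u; b; c] ->
  deg adj w = 3%N ->
  deg adj a = 3%N ->
  deg adj v = 2%N ->
  deg adj u = 2%N -> False.
Proof.
move=> uL Cw Ca dw da dv du.
pose G y : R := if y == w then (- 1%:R : R) else if y == a then (1%:R : R) else 0.
have gL : forall y, G y != 0 -> y \in [:: w; a; v; b; c; u].
  move=> y; rewrite /G; repeat case: ifP => [/eqP -> _ | _]; memtac.
have nbL : forall y z, G y != 0 -> adj y z -> z \in [:: w; a; v; b; c; u].
  move=> y z; rewrite /G; repeat case: ifP => [/eqP -> _ | _].
  - by rewrite adjsym Cw; apply: sub_mem; memtac.
  - by rewrite adjsym Ca; apply: sub_mem; memtac.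
  by move=> /negP H; exfalso; apply: H; apply/eqP.
have := test uL gL nbL.
move: (uL); rewrite /= !inE !negb_or => ?; explode.
have := inv_deg2 w.
have := inv_deg2 a.
have := inv_deg2 v.
have := inv_deg2 b.
have := inv_deg2 c.
have := inv_deg2 u.
rewrite !big_cons !big_nil /G; simpl_eq.
rewrite ?mulr0 ?addr0 ?mul0r ?add0r.
rewrite ?Cw ?Ca; memtac; simpl_eq.
rewrite ?dw ?da ?dv ?du.
move=> *; clear dw da dv du; lra.
Qed.

Lemma T8 u v w a b c :
  uniq [:: u; v; w; a; b; c] ->
  full u [:: v; a] ->
  full w [:: v; b; c] ->
  deg adj u = 2%N ->
  deg adj v = 2%N ->
  deg adj w = 3%N ->
  deg adj a = 3%N ->
  (3 <= deg adj b)%N -> False.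
Proof.
move=> uL Cu Cw du dv dw da bb.
pose G y : R := if y == u then (1%:R : R) else if y == w then (- 1%:R : R) else 0.
have gL : forall y, G y != 0 -> y \in [:: u; v; w; a; b; c].
  move=> y; rewrite /G; repeat case: ifP => [/eqP -> _ | _]; memtac.
have nbL : forall y z, G y != 0 -> adj y z -> z \in [:: u; v; w; a; b; c].
  move=> y z; rewrite /G; repeat case: ifP => [/eqP -> _ | _].
  - by rewrite adjsym Cu; apply: sub_mem; memtac.
  - by rewrite adjsym Cw; apply: sub_mem; memtac.
  by move=> /negP H; exfalso; apply: H; apply/eqP.
have := test uL gL nbL.
move: (uL); rewrite /= !inE !negb_or => ?; explode.
have := inv_deg2 u.
have := inv_deg2 v.
have := inv_deg2 w.
have := inv_deg2 a.
have := inv_deg2 b.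
have := inv_deg2 c.
have := inv_deg_le (k := 2) bb.
rewrite !big_cons !big_nil /G; simpl_eq.
rewrite ?mulr0 ?addr0 ?mul0r ?add0r.
rewrite ?Cu ?Cw; memtac; simpl_eq.
rewrite ?du ?dv ?dw ?da.
move=> *; clear du dv dw da bb; lra.
Qed.

Lemma T9 v a b u w a1 a2 bp :
  uniq [:: v; a; b; u; w; a1; a2; bp] ->
  full v [:: u; w] ->
  full a [:: u; a1; a2] ->
  full b [:: w; bp] ->
  deg adj v = 2%N ->
  deg adj a = 3%N ->
  deg adj b = 2%N ->
  deg adj u = 2%N ->
  deg adj w = 3%N -> False.
Proof.
move=> uL Cv Ca Cb dv da db du dw.
pose G y : R := if y == v then (- 2%:R : R) else if y == a then (1%:R : R) else if y == b then (1%:R : R) else 0.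
have gL : forall y, G y != 0 -> y \in [:: v; a; b; u; w; a1; a2; bp].
  move=> y; rewrite /G; repeat case: ifP => [/eqP -> _ | _]; memtac.
have nbL : forall y z, G y != 0 -> adj y z -> z \in [:: v; a; b; u; w; a1; a2; bp].
  move=> y z; rewrite /G; repeat case: ifP => [/eqP -> _ | _].
  - by rewrite adjsym Cv; apply: sub_mem; memtac.
  - by rewrite adjsym Ca; apply: sub_mem; memtac.
  - by rewrite adjsym Cb; apply: sub_mem; memtac.
  by move=> /negP H; exfalso; apply: H; apply/eqP.
have := test uL gL nbL.
move: (uL); rewrite /= !inE !negb_or => ?; explode.
have := inv_deg2 v.
have := inv_deg2 a.
have := inv_deg2 b.
have := inv_deg2 u.
have := inv_deg2 w.
have := inv_deg2 a1.
have := inv_deg2 a2.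
have := inv_deg2 bp.
rewrite !big_cons !big_nil /G; simpl_eq.
rewrite ?mulr0 ?addr0 ?mul0r ?add0r.
rewrite ?Cv ?Ca ?Cb; memtac; simpl_eq.
rewrite ?dv ?da ?db ?du ?dw.
move=> *; clear dv da db du dw; lra.
Qed.

Lemma T10 u v w b a c :
  uniq [:: u; v; w; b; a; c] ->
  full u [:: v; a] ->
  full v [:: u; w] ->
  full w [:: v; b; c] ->
  full b [:: w; c] ->
  deg adj u = 2%N ->
  deg adj v = 2%N ->
  deg adj w = 3%N ->
  deg adj b = 2%N -> False.
Proof.
move=> uL Cu Cv Cw Cb du dv dw db.
pose G y : R := if y == u then (- 1%:R : R) else if y == v then (1%:R : R) else if y == w then (1%:R : R) else if y == b then (- 1%:R : R) else 0.
have gL : forall y, G y != 0 -> y \in [:: u; v; w; b; a; c].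
  move=> y; rewrite /G; repeat case: ifP => [/eqP -> _ | _]; memtac.
have nbL : forall y z, G y != 0 -> adj y z -> z \in [:: u; v; w; b; a; c].
  move=> y z; rewrite /G; repeat case: ifP => [/eqP -> _ | _].
  - by rewrite adjsym Cu; apply: sub_mem; memtac.
  - by rewrite adjsym Cv; apply: sub_mem; memtac.
  - by rewrite adjsym Cw; apply: sub_mem; memtac.
  - by rewrite adjsym Cb; apply: sub_mem; memtac.
  by move=> /negP H; exfalso; apply: H; apply/eqP.
have := test uL gL nbL.
move: (uL); rewrite /= !inE !negb_or => ?; explode.
have := inv_deg2 u.
have := inv_deg2 v.
have := inv_deg2 w.
have := inv_deg2 b.
have := inv_deg2 a.
have := inv_deg2 c.
rewrite !big_cons !big_nil /G; simpl_eq.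
rewrite ?mulr0 ?addr0 ?mul0r ?add0r.
rewrite ?Cu ?Cv ?Cw ?Cb; memtac; simpl_eq.
rewrite ?du ?dv ?dw ?db.
move=> *; clear du dv dw db; lra.
Qed.

Lemma T11 v b u w a1 :
  uniq [:: v; b; u; w; a1] ->
  full v [:: u; w] ->
  full b [:: w; a1] ->
  deg adj v = 2%N ->
  deg adj b = 2%N ->
  deg adj u = 2%N ->
  deg adj w = 3%N ->
  (3 <= deg adj a1)%N -> False.
Proof.
move=> uL Cv Cb dv db du dw ba1.
pose G y : R := if y == v then (1%:R : R) else if y == b then (- 1%:R : R) else 0.
have gL : forall y, G y != 0 -> y \in [:: v; b; u; w; a1].
  move=> y; rewrite /G; repeat case: ifP => [/eqP -> _ | _]; memtac.
have nbL : forall y z, G y != 0 -> adj y z -> z \in [:: v; b; u; w; a1].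
  move=> y z; rewrite /G; repeat case: ifP => [/eqP -> _ | _].
  - by rewrite adjsym Cv; apply: sub_mem; memtac.
  - by rewrite adjsym Cb; apply: sub_mem; memtac.
  by move=> /negP H; exfalso; apply: H; apply/eqP.
have := test uL gL nbL.
move: (uL); rewrite /= !inE !negb_or => ?; explode.
have := inv_deg2 v.
have := inv_deg2 b.
have := inv_deg2 u.
have := inv_deg2 w.
have := inv_deg2 a1.
have := inv_deg_le (k := 2) ba1.
rewrite !big_cons !big_nil /G; simpl_eq.
rewrite ?mulr0 ?addr0 ?mul0r ?add0r.
rewrite ?Cv ?Cb; memtac; simpl_eq.
rewrite ?dv ?db ?du ?dw.
move=> *; clear dv db du dw ba1; lra.
Qed.

Lemma T12 u w a1 v a b c :
  uniq [:: u; w; a1; v; a; b; c] ->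
  full u [:: v; a] ->
  full w [:: v; b; c] ->
  full a1 [:: a; b] ->
  deg adj u = 2%N ->
  deg adj w = 3%N ->
  deg adj a1 = 2%N ->
  deg adj v = 2%N ->
  deg adj a = 3%N ->
  deg adj b = 2%N ->
  (3 <= deg adj c)%N -> False.
Proof.
move=> uL Cu Cw Ca1 du dw da1 dv da db bc.
pose G y : R := if y == u then (1%:R : R) else if y == w then (- 1%:R : R) else if y == a1 then (1%:R : R) else 0.
have gL : forall y, G y != 0 -> y \in [:: u; w; a1; v; a; b; c].
  move=> y; rewrite /G; repeat case: ifP => [/eqP -> _ | _]; memtac.
have nbL : forall y z, G y != 0 -> adj y z -> z \in [:: u; w; a1; v; a; b; c].
  move=> y z; rewrite /G; repeat case: ifP => [/eqP -> _ | _].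
  - by rewrite adjsym Cu; apply: sub_mem; memtac.
  - by rewrite adjsym Cw; apply: sub_mem; memtac.
  - by rewrite adjsym Ca1; apply: sub_mem; memtac.
  by move=> /negP H; exfalso; apply: H; apply/eqP.
have := test uL gL nbL.
move: (uL); rewrite /= !inE !negb_or => ?; explode.
have := inv_deg2 u.
have := inv_deg2 w.
have := inv_deg2 a1.
have := inv_deg2 v.
have := inv_deg2 a.
have := inv_deg2 b.
have := inv_deg2 c.
have := inv_deg_le (k := 2) bc.
rewrite !big_cons !big_nil /G; simpl_eq.
rewrite ?mulr0 ?addr0 ?mul0r ?add0r.
rewrite ?Cu ?Cw ?Ca1; memtac; simpl_eq.
rewrite ?du ?dw ?da1 ?dv ?da ?db.
move=> *; clear du dw da1 dv da db bc; lra.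
Qed.

Lemma T13 v a b c u w a1 a2 cp :
  uniq [:: v; a; b; c; u; w; a1; a2; cp] ->
  full v [:: u; w] ->
  full a [:: u; a1; a2] ->
  full b [:: w; a1] ->
  full c [:: w; cp] ->
  deg adj v = 2%N ->
  deg adj a = 3%N ->
  deg adj b = 2%N ->
  deg adj c = 2%N ->
  deg adj u = 2%N ->
  deg adj w = 3%N ->
  deg adj a1 = 2%N -> False.
Proof.
move=> uL Cv Ca Cb Cc dv da db dc du dw da1.
pose G y : R := if y == v then (- 1%:R : R) else if y == a then (1%:R : R) else if y == b then (- 1%:R : R) else if y == c then (1%:R : R) else 0.
have gL : forall y, G y != 0 -> y \in [:: v; a; b; c; u; w; a1; a2; cp].
  move=> y; rewrite /G; repeat case: ifP => [/eqP -> _ | _]; memtac.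
have nbL : forall y z, G y != 0 -> adj y z -> z \in [:: v; a; b; c; u; w; a1; a2; cp].
  move=> y z; rewrite /G; repeat case: ifP => [/eqP -> _ | _].
  - by rewrite adjsym Cv; apply: sub_mem; memtac.
  - by rewrite adjsym Ca; apply: sub_mem; memtac.
  - by rewrite adjsym Cb; apply: sub_mem; memtac.
  - by rewrite adjsym Cc; apply: sub_mem; memtac.
  by move=> /negP H; exfalso; apply: H; apply/eqP.
have := test uL gL nbL.
move: (uL); rewrite /= !inE !negb_or => ?; explode.
have := inv_deg2 v.
have := inv_deg2 a.
have := inv_deg2 b.
have := inv_deg2 c.
have := inv_deg2 u.
have := inv_deg2 w.
have := inv_deg2 a1.
have := inv_deg2 a2.
have := inv_deg2 cp.
rewrite !big_cons !big_nil /G; simpl_eq.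
rewrite ?mulr0 ?addr0 ?mul0r ?add0r.
rewrite ?Cv ?Ca ?Cb ?Cc; memtac; simpl_eq.
rewrite ?dv ?da ?db ?dc ?du ?dw ?da1.
move=> *; clear dv da db dc du dw da1; lra.
Qed.

Lemma T14 v a b c u w a1 a2 :
  uniq [:: v; a; b; c; u; w; a1; a2] ->
  full v [:: u; w] ->
  full a [:: u; a1; a2] ->
  full b [:: w; a1] ->
  full c [:: w; a2] ->
  deg adj v = 2%N ->
  deg adj a = 3%N ->
  deg adj b = 2%N ->
  deg adj c = 2%N ->
  deg adj u = 2%N ->
  deg adj w = 3%N ->
  (3 <= deg adj a2)%N -> False.
Proof.
move=> uL Cv Ca Cb Cc dv da db dc du dw ba2.
pose G y : R := if y == v then (1%:R : R) else if y == a then (- 1%:R : R) else if y == b then (1%:R : R) else if y == c then (- 1%:R : R) else 0.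
have gL : forall y, G y != 0 -> y \in [:: v; a; b; c; u; w; a1; a2].
  move=> y; rewrite /G; repeat case: ifP => [/eqP -> _ | _]; memtac.
have nbL : forall y z, G y != 0 -> adj y z -> z \in [:: v; a; b; c; u; w; a1; a2].
  move=> y z; rewrite /G; repeat case: ifP => [/eqP -> _ | _].
  - by rewrite adjsym Cv; apply: sub_mem; memtac.
  - by rewrite adjsym Ca; apply: sub_mem; memtac.
  - by rewrite adjsym Cb; apply: sub_mem; memtac.
  - by rewrite adjsym Cc; apply: sub_mem; memtac.
  by move=> /negP H; exfalso; apply: H; apply/eqP.
have := test uL gL nbL.
move: (uL); rewrite /= !inE !negb_or => ?; explode.
have := inv_deg2 v.
have := inv_deg2 a.
have := inv_deg2 b.
have := inv_deg2 c.
have := inv_deg2 u.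
have := inv_deg2 w.
have := inv_deg2 a1.
have := inv_deg2 a2.
have := inv_deg_le (k := 2) ba2.
rewrite !big_cons !big_nil /G; simpl_eq.
rewrite ?mulr0 ?addr0 ?mul0r ?add0r.
rewrite ?Cv ?Ca ?Cb ?Cc; memtac; simpl_eq.
rewrite ?dv ?da ?db ?dc ?du ?dw.
move=> *; clear dv da db dc du dw ba2; lra.
Qed.


Ltac rw_closed := repeat match goal with
  | C : forall z, adj z ?s = _ |- context [adj ?x ?s] => rewrite (C x)
  | C : forall z, adj z ?s = _ |- context [adj ?s ?x] => rewrite (adjsym s x) (C x)
  end.
Ltac uniqtac := rewrite /= ?inE ?negb_or; simpl_eq; try done.
Ltac adjtac := rw_closed; rewrite ?inE; simpl_eq.
Ltac explode_uniq H := move: (H); rewrite /= ?inE ?negb_or => ?; explode.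

Lemma deg2_of (x : 'I_n) : ~ (3 <= deg adj x)%N -> deg adj x = 2%N.
Proof. by move: (Hmin x) => h1 h2; apply/eqP; rewrite eqn_leq h1 andbT leqNgt; apply/negP. Qed.

Definition book8 := exists w a v b c u a1 a2,
  uniq [:: w; a; v; b; c; u; a1; a2] /\ (full w [:: v; b; c]) /\ (full a [:: u; a1; a2]) /\
  (full v [:: u; w]) /\ (full b [:: w; a1]) /\ (full c [:: w; a2]) /\ (full u [:: v; a]) /\
  (full a1 [:: a; b]) /\ (full a2 [:: a; c]).

Lemma stageN1 u v w a b c a1 a2 : uniq [:: u; v; w; a; b; c; a1; a2] ->
  full u [:: v; a] -> full v [:: u; w] -> full w [:: v; b; c] -> full a [:: u; a1; a2] ->
  full b [:: w; a1] -> deg adj u = 2%N -> deg adj v = 2%N -> deg adj w = 3%N ->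
  deg adj a = 3%N -> deg adj b = 2%N -> book8.
Proof.
move=> uL Cu Cv Cw Ca Cb du dv dw da db; explode_uniq uL.
have da1 : deg adj a1 = 2%N.
  apply: deg2_of => hd; apply: (T11 (v:=v) (b:=b) (u:=u) (w:=w) (a1:=a1)) => //; uniqtac.
have Ca1 : full a1 [:: a; b].
  apply: closed_nb => //; first by uniqtac.
  by rewrite /= andbT; adjtac.
have dc : deg adj c = 2%N.
  apply: deg2_of => hd.
  by apply: (T12 (u:=u) (w:=w) (a1:=a1) (v:=v) (a:=a) (b:=b) (c:=c)) => //; uniqtac.
have [cp [ccp cpw]] : exists y, adj c y /\ y \notin [:: w] by apply: extra_nb; rewrite dc.
have cpu : cp != u by apply/negP => /eqP E; move: ccp; rewrite E; adjtac.
have cpv : cp != v by apply/negP => /eqP E; move: ccp; rewrite E; adjtac.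
have cpw' : cp != w by move: cpw; rewrite inE.
have cpa : cp != a by apply/negP => /eqP E; move: ccp; rewrite E; adjtac.
have cpb : cp != b by apply/negP => /eqP E; move: ccp; rewrite E; adjtac.
have cpa1 : cp != a1 by apply/negP => /eqP E; move: ccp; rewrite E; adjtac.
have cpc : cp != c by apply/negP => /eqP E; move: ccp; rewrite E adjirr.
have Cc : full c [:: w; cp].
  apply: closed_nb => //; first by uniqtac.
  by rewrite /= ccp andbT; adjtac.
case: (eqVneq cp a2) => [E|cpa2].
  subst cp.
  have da2 : deg adj a2 = 2%N.
    apply: deg2_of => hd.
    by apply: (T14 (v:=v) (a:=a) (b:=b) (c:=c) (u:=u) (w:=w) (a1:=a1) (a2:=a2)) => //; uniqtac.
  have Ca2 : full a2 [:: a; c].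
    apply: closed_nb => //; first by uniqtac.
    by rewrite /= andbT; adjtac.
  exists w, a, v, b, c, u, a1, a2; do !split => //; uniqtac.
exfalso.
by apply: (T13 (v:=v) (a:=a) (b:=b) (c:=c) (u:=u) (w:=w) (a1:=a1) (a2:=a2) (cp:=cp)) => //; uniqtac.
Qed.

Lemma stageN u v w a b c a1 a2 : uniq [:: u; v; w; a; b; c; a1; a2] ->
  full u [:: v; a] -> full v [:: u; w] -> full w [:: v; b; c] -> full a [:: u; a1; a2] ->
  deg adj u = 2%N -> deg adj v = 2%N -> deg adj w = 3%N ->
  deg adj a = 3%N -> book8.
Proof.
move=> uL Cu Cv Cw Ca du dv dw da; explode_uniq uL.
have db : deg adj b = 2%N.
  apply: deg2_of => hd.
  by apply: (T8 (u:=u) (v:=v) (w:=w) (a:=a) (b:=b) (c:=c)) => //; uniqtac.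
have [bp [bbp bpw]] : exists y, adj b y /\ y \notin [:: w] by apply: extra_nb; rewrite db.
have bpu : bp != u by apply/negP => /eqP E; move: bbp; rewrite E; adjtac.
have bpv : bp != v by apply/negP => /eqP E; move: bbp; rewrite E; adjtac.
have bpw' : bp != w by move: bpw; rewrite inE.
have bpa : bp != a by apply/negP => /eqP E; move: bbp; rewrite E; adjtac.
have bpb : bp != b by apply/negP => /eqP E; move: bbp; rewrite E adjirr.
have Cb : full b [:: w; bp].
  apply: closed_nb => //; first by uniqtac.
  by rewrite /= bbp andbT; adjtac.
case: (eqVneq bp c) => [E|bpc].
  subst bp; exfalso.
  by apply: (T10 (u:=u) (v:=v) (w:=w) (b:=b) (a:=a) (c:=c)) => //; uniqtac.
case: (eqVneq bp a1) => [E|bpa1].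
  subst bp.
  by apply: (stageN1 (u:=u) (v:=v) (w:=w) (a:=a) (b:=b) (c:=c) (a1:=a1) (a2:=a2)) => //; uniqtac.
case: (eqVneq bp a2) => [E|bpa2].
  subst bp.
  apply: (stageN1 (u:=u) (v:=v) (w:=w) (a:=a) (b:=b) (c:=c) (a1:=a2) (a2:=a1)) => //; try uniqtac.
  by move=> z; rewrite Ca !inE [(z == a1) || _]orbC.
exfalso.
by apply: (T9 (v:=v) (a:=a) (b:=b) (u:=u) (w:=w) (a1:=a1) (a2:=a2) (bp:=bp)) => //; uniqtac.
Qed.

Lemma stageABC u v w a b c : uniq [:: u; v; w; a; b; c] ->
  full u [:: v; a] -> full v [:: u; w] -> full w [:: v; b; c] ->
  deg adj u = 2%N -> deg adj v = 2%N -> deg adj w = 3%N -> book8.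
Proof.
move=> uL Cu Cv Cw du dv dw; explode_uniq uL.
have da3 : ~ (4 <= deg adj a)%N.
  by move=> hd; apply: (T3 (u:=u) (v:=v) (w:=w) (a:=a) (b:=b) (c:=c)) => //; uniqtac.
have ua : adj u a by rewrite adjsym; adjtac.
have : deg adj a = 2%N \/ deg adj a = 3%N.
  by move: (Hmin a) da3; case: (deg adj a) => [|[|[|[|k]]]] //; auto.
case=> da.
  have [ap [aap apu]] : exists y, adj a y /\ y \notin [:: u] by apply: extra_nb; rewrite da.
  have apu' : ap != u by move: apu; rewrite inE.
  have apv : ap != v by apply/negP => /eqP E; move: aap; rewrite E; adjtac.
  have apw : ap != w by apply/negP => /eqP E; move: aap; rewrite E; adjtac.
  have apa : ap != a by apply/negP => /eqP E; move: aap; rewrite E adjirr.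
  have Ca : full a [:: u; ap].
    apply: closed_nb => //; first by uniqtac.
    by rewrite /= aap andbT; adjtac.
  exfalso.
  case: (eqVneq ap b) => [E|apb].
    subst ap.
    by apply: (T5 (v:=v) (u:=u) (w:=w) (a:=a) (b:=b)) => //; uniqtac.
  case: (eqVneq ap c) => [E|apc].
    subst ap.
    by apply: (T5 (v:=v) (u:=u) (w:=w) (a:=a) (b:=c)) => //; uniqtac.
  by apply: (T4 (v:=v) (u:=u) (w:=w) (a:=a) (ap:=ap)) => //; uniqtac.
have [a1 [aa1 a1u]] : exists y, adj a y /\ y \notin [:: u] by apply: extra_nb; rewrite da.
have a1u' : a1 != u by move: a1u; rewrite inE.
have a1v : a1 != v by apply/negP => /eqP E; move: aa1; rewrite E; adjtac.
have a1w : a1 != w by apply/negP => /eqP E; move: aa1; rewrite E; adjtac.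
have a1a : a1 != a by apply/negP => /eqP E; move: aa1; rewrite E adjirr.
have [a2 [aa2 a2u]] : exists y, adj a y /\ y \notin [:: u; a1] by apply: extra_nb; rewrite da.
move: a2u; rewrite !inE negb_or => /andP[a2u' a2a1].
have a2v : a2 != v by apply/negP => /eqP E; move: aa2; rewrite E; adjtac.
have a2w : a2 != w by apply/negP => /eqP E; move: aa2; rewrite E; adjtac.
have a2a : a2 != a by apply/negP => /eqP E; move: aa2; rewrite E adjirr.
have Ca : full a [:: u; a1; a2].
  apply: closed_nb => //; first by uniqtac.
  by rewrite /= aa1 aa2 andbT; adjtac.
have Cw' : full w [:: v; c; b] by move=> z; rewrite Cw !inE [(z == b) || _]orbC.
case: (eqVneq a1 b) => [E1|a1b].
  subst a1; exfalso.
  case: (eqVneq a2 c) => [E2|a2c].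
    subst a2.
    by apply: (T7 (w:=w) (a:=a) (v:=v) (b:=b) (c:=c) (u:=u)) => //; uniqtac.
  by apply: (T6 (u:=u) (v:=v) (w:=w) (a:=a) (b:=b) (c:=c) (n1:=a2)) => //; uniqtac.
case: (eqVneq a1 c) => [E1|a1c].
  subst a1; exfalso.
  case: (eqVneq a2 b) => [E2|a2b].
    subst a2.
    by apply: (T7 (w:=w) (a:=a) (v:=v) (b:=c) (c:=b) (u:=u)) => //; uniqtac.
  by apply: (T6 (u:=u) (v:=v) (w:=w) (a:=a) (b:=c) (c:=b) (n1:=a2)) => //; uniqtac.
have Ca' : full a [:: u; a2; a1] by move=> z; rewrite Ca !inE [(z == a1) || _]orbC.
case: (eqVneq a2 b) => [E2|a2b].
  subst a2; exfalso.
  by apply: (T6 (u:=u) (v:=v) (w:=w) (a:=a) (b:=b) (c:=c) (n1:=a1)) => //; uniqtac.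
case: (eqVneq a2 c) => [E2|a2c].
  subst a2; exfalso.
  by apply: (T6 (u:=u) (v:=v) (w:=w) (a:=a) (b:=c) (c:=b) (n1:=a1)) => //; uniqtac.
by apply: (stageN (u:=u) (v:=v) (w:=w) (a:=a) (b:=b) (c:=c) (a1:=a1) (a2:=a2)) => //; uniqtac.
Qed.

Lemma stageTop u v w : u != v -> v != w -> u != w -> adj u v -> adj v w ->
  deg adj u = 2%N -> deg adj v = 2%N -> deg adj w = 3%N -> book8.
Proof.
move=> uv vw uw auv avw du dv dw.
have Cv : full v [:: u; w].
  apply: closed_nb => //; first by uniqtac.
  by rewrite /= avw (adjsym v u) auv.
have [a [ua av]] : exists y, adj u y /\ y \notin [:: v] by apply: extra_nb; rewrite du.
have av' : a != v by move: av; rewrite inE.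
have au : a != u by apply/negP => /eqP E; move: ua; rewrite E adjirr.
have Cu : full u [:: v; a].
  apply: closed_nb => //; first by uniqtac.
  by rewrite /= auv ua.
case: (eqVneq a w) => [E|aw].
  subst a; exfalso.
  have [c [wc cvu]] : exists y, adj w y /\ y \notin [:: v; u] by apply: extra_nb; rewrite dw.
  move: cvu; rewrite !inE negb_or => /andP[cv cu].
  have cw : c != w by apply/negP => /eqP E; move: wc; rewrite E adjirr.
  have Cw : full w [:: v; u; c].
    apply: closed_nb => //; first by uniqtac.
    by rewrite /= wc andbT; adjtac.
  have dc : deg adj c = 2%N.
    apply: deg2_of => hd.
    by apply: (Ttri1 (u:=u) (v:=v) (w:=w) (c:=c)) => //; uniqtac.
  have [cp [ccp cpw]] : exists y, adj c y /\ y \notin [:: w] by apply: extra_nb; rewrite dc.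
  have cpw' : cp != w by move: cpw; rewrite inE.
  have cpu : cp != u by apply/negP => /eqP E; move: ccp; rewrite E; adjtac.
  have cpv : cp != v by apply/negP => /eqP E; move: ccp; rewrite E; adjtac.
  have cpc : cp != c by apply/negP => /eqP E; move: ccp; rewrite E adjirr.
  have Cc : full c [:: w; cp].
    apply: closed_nb => //; first by uniqtac.
    by rewrite /= ccp andbT; adjtac.
  by apply: (Ttri2 (u:=u) (v:=v) (w:=w) (c:=c) (cp:=cp)) => //; uniqtac.
have [b [wb bv]] : exists y, adj w y /\ y \notin [:: v] by apply: extra_nb; rewrite dw.
have bv' : b != v by move: bv; rewrite inE.
have bw : b != w by apply/negP => /eqP E; move: wb; rewrite E adjirr.
have bu : b != u by apply/negP => /eqP E; move: wb; rewrite E; adjtac.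
have [c [wc cvb]] : exists y, adj w y /\ y \notin [:: v; b] by apply: extra_nb; rewrite dw.
move: cvb; rewrite !inE negb_or => /andP[cv cb].
have cw : c != w by apply/negP => /eqP E; move: wc; rewrite E adjirr.
have cu : c != u by apply/negP => /eqP E; move: wc; rewrite E; adjtac.
have Cw : full w [:: v; b; c].
  apply: closed_nb => //; first by uniqtac.
  by rewrite /= wb wc (adjsym w v) avw.
have Cw' : full w [:: v; c; b] by move=> z; rewrite Cw !inE [(z == b) || _]orbC.
case: (eqVneq a b) => [E|ab].
  subst a; exfalso.
  by apply: (T2 (u:=u) (v:=v) (w:=w) (b:=b) (c:=c)) => //; uniqtac.
case: (eqVneq a c) => [E|ac].
  subst a; exfalso.
  by apply: (T2 (u:=u) (v:=v) (w:=w) (b:=c) (c:=b)) => //; uniqtac.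
by apply: (stageABC (u:=u) (v:=v) (w:=w) (a:=a) (b:=b) (c:=c)) => //; uniqtac.
Qed.

Lemma book_iso : (forall x y, connect adj x y) -> book8 -> iso_book adj 3.
Proof.
move=> conn [w [a [v [b [c [u [a1 [a2 [uL [Cw [Ca [Cv [Cb [Cc [Cu [Ca1 Ca2]]]]]]]]]]]]]]]].
explode_uniq uL.
pose T := [:: w; a; v; b; c; u; a1; a2].
have clos1 : forall x y, x \in T -> adj x y -> y \in T.
  move=> x y xT axy; move: xT.
  rewrite in_cons => /predU1P [E|xT]; first by move: axy; rewrite E adjsym Cw => H; apply: (sub_mem _ H); memtac.
  move: xT.
  rewrite in_cons => /predU1P [E|xT]; first by move: axy; rewrite E adjsym Ca => H; apply: (sub_mem _ H); memtac.
  move: xT.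
  rewrite in_cons => /predU1P [E|xT]; first by move: axy; rewrite E adjsym Cv => H; apply: (sub_mem _ H); memtac.
  move: xT.
  rewrite in_cons => /predU1P [E|xT]; first by move: axy; rewrite E adjsym Cb => H; apply: (sub_mem _ H); memtac.
  move: xT.
  rewrite in_cons => /predU1P [E|xT]; first by move: axy; rewrite E adjsym Cc => H; apply: (sub_mem _ H); memtac.
  move: xT.
  rewrite in_cons => /predU1P [E|xT]; first by move: axy; rewrite E adjsym Cu => H; apply: (sub_mem _ H); memtac.
  move: xT.
  rewrite in_cons => /predU1P [E|xT]; first by move: axy; rewrite E adjsym Ca1 => H; apply: (sub_mem _ H); memtac.
  move: xT.
  rewrite mem_seq1 => /eqP E; by move: axy; rewrite E adjsym Ca2 => H; apply: (sub_mem _ H); memtac.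
have clos : closed adj (mem T).
  move=> x y axy; apply/idP/idP => [xT|yT]; first exact: clos1 axy.
  by apply: clos1 yT _; rewrite adjsym.
have allT : forall z, z \in T.
  by move=> z; rewrite -(closed_connect clos (conn w z)) inE eqxx.
pose g (i : 'I_(2 * 3 + 2)) : 'I_n := nth w T i.
pose f (z : 'I_n) : 'I_(2 * 3 + 2) := inord (index z T).
have gf : cancel f g.
  by move=> z; rewrite /f /g inordK ?nth_index ?allT // index_mem allT.
have fg : cancel g f.
  move=> i; have hi : (i < size T)%N by case: i.
  by apply/val_inj; rewrite /f /g (index_uniq w hi uL) inord_val.
exists f; split; first by exists g.
move=> p q; rewrite -{1}(gf p) -{1}(gf q); move: (f p) (f q) => i j.
rewrite /g.
case: i => [[|[|[|[|[|[|[|[|i]]]]]]]] Hi] //;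
case: j => [[|[|[|[|[|[|[|[|j]]]]]]]] Hj] //=;
  by rewrite /book_adj /book_edge /=; adjtac.
Qed.

End G.
Local Close Scope ring_scope.

Theorem mainTheorem11 (R : realType) (n : nat) (adj : rel 'I_n) :
  simple_graph adj ->
  connected_graph adj ->
  (3 <= n)%N ->
  min_degree_is adj 2 ->
  eps_is adj (1 / 2 : R)%R ->
  (exists u v w : 'I_n,
      [/\ u != v, v != w, u != w, adj u v & adj v w] /\
      [/\ deg adj u = 2, deg adj v = 2 & deg adj w = 3]) ->
  iso_book adj 3.
Proof.
move=> [asym airr] conn n3 [Hmin _] [Heps _] [u [v [w [[uv vw uw auv avw] [du dv dw]]]]].
have dpos : forall x, (0 < deg adj x)%N by move=> x; apply: leq_trans (Hmin x).
have Hkey := key asym dpos Heps.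
apply: (book_iso asym airr conn).
exact: (stageTop asym airr Hmin Hkey uv vw uw auv avw du dv dw).
Qed.
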